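(* Let $Q$ be a quandle, $G$ a group and $\rho:Q\to\mathrm{Core}(G)$ a quandle homomorphism. Then the map $\theta(\rho):Q\times Q\to G$, $\theta(\rho)_{x,y}=\rho(x)\rho(y)^{-1}$, is a quandle cocycle of $Q$ with values in $G$.
   Context: A quandle is a set $Q$ with a binary operation $*$ such that every left translation $L_x:y\mapsto x*y$ is bijective, $x*(y*z)=(x*y)*(x*z)$ and $x*x=x$. $\mathrm{Core}(G)$ is the quandle on $G$ with $x*y=xy^{-1}x$. A quandle cocycle with values in a group $G$ is a map $\theta:Q\times Q\to G$ with $\theta_{x*y,x*z}\theta_{x,z}=\theta_{x,y*z}\theta_{y,z}$ and $\theta_{x,x}=1$ for all $x,y,z\in Q$. *)

(* Defs.v *)
Set Implicit Arguments.

Record Group := {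
  gcar :> Type;
  gmul : gcar -> gcar -> gcar;
  gone : gcar;
  ginv : gcar -> gcar;
  gmulA : forall a b c, gmul a (gmul b c) = gmul (gmul a b) c;
  gmul1l : forall a, gmul gone a = a;
  gmul1r : forall a, gmul a gone = a;
  gmulVl : forall a, gmul (ginv a) a = gone;
  gmulVr : forall a, gmul a (ginv a) = gone
}.

Definition bijective {A B : Type} (f : A -> B) :=
  exists g : B -> A, (forall a, g (f a) = a) /\ (forall b, f (g b) = b).

Record Quandle := {
  qcar :> Type;
  qop : qcar -> qcar -> qcar;
  qL_bij : forall x, bijective (qop x);
  qdist : forall x y z, qop x (qop y z) = qop (qop x y) (qop x z);
  qidem : forall x, qop x x = x
}.

Definition core_op (G : Group) (x y : G) : G :=
  gmul G (gmul G x (ginv G y)) x.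

Definition is_hom_to_core (Q : Quandle) (G : Group) (rho : Q -> G) :=
  forall x y, rho (qop Q x y) = core_op G (rho x) (rho y).

Definition quandle_cocycle (Q : Quandle) (G : Group) (theta : Q -> Q -> G) :=
  (forall x y z,
      gmul G (theta (qop Q x y) (qop Q x z)) (theta x z)
      = gmul G (theta x (qop Q y z)) (theta y z))
  /\ (forall x, theta x x = gone G).

Definition theta_of (Q : Quandle) (G : Group) (rho : Q -> G) : Q -> Q -> G :=
  fun x y => gmul G (rho x) (ginv G (rho y)).

(* Main.v *)
Require Import Defs.

Section G.
Variable G : Group.
Local Notation "a * b" := (gmul G a b).
Local Notation "a ^-1" := (ginv G a) (at level 3).

Lemma mA' a b c : (a * b) * c = a * (b * c).
Proof. symmetry; apply gmulA. Qed.
Lemma cancL a b : a^-1 * (a * b) = b.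
Proof. rewrite gmulA, gmulVl, gmul1l; reflexivity. Qed.
Lemma cancR a b : a * (a^-1 * b) = b.
Proof. rewrite gmulA, gmulVr, gmul1l; reflexivity. Qed.
Lemma inv_uniq a b : a * b = gone G -> b = a^-1.
Proof.
  intro H. rewrite <- (gmul1r G a^-1), <- H, cancL. reflexivity.
Qed.
Lemma invinv a : (a^-1)^-1 = a.
Proof. symmetry; apply inv_uniq; apply gmulVl. Qed.
Lemma invM a b : (a * b)^-1 = b^-1 * a^-1.
Proof.
  symmetry; apply inv_uniq. rewrite mA', cancR. apply gmulVr.
Qed.
End G.

Theorem lemma4p2 (Q : Quandle) (G : Group) (rho : Q -> G) :
  is_hom_to_core Q G rho -> quandle_cocycle Q G (theta_of Q G rho).
Proof.
  intro H. unfold quandle_cocycle, theta_of. split.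
  - intros x y z. rewrite !H. unfold core_op.
    rewrite !invM, !invinv, !mA'. repeat first [rewrite cancR | rewrite cancL]. reflexivity.
  - intro x. apply gmulVr.
Qed.
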